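(* Let $R$ be a commutative ring with unit, $\mathcal{P}$ a poset satisfying the descending chain condition, $F\colon\mathcal{P}\to R\text{-mod}$ a functor, and $i\in\mathcal{P}$. If the natural map $\operatorname{colim}_{\mathcal{P}_{<j}}F\to F(j)$ is injective for every $j\le i$, then $F$ is pseudo-projective at $j$ for every $j\le i$.
   Context: DCC: no infinite strictly descending chains. $\mathcal{P}_{<j}=\{k:k<j\}$, $\mathcal{P}_{\le j}=\{k:k\le j\}$. $F(k<j)$ is the image of the arrow $k\to j$, $F(j<j)=1$. $\operatorname{Im}_F(k)=\sum_{l<k}\operatorname{Im}F(l<k)$; $\max J$ is the set of maximal elements of $J$. $F$ is pseudo-projective at $j$ if for every finite $J\subset\mathcal{P}_{\le j}$ and every $\oplus_{k\in J}x_k\in\bigoplus_{k\in J}F(k)$ with $\sum_{k\in J}F(k<j)(x_k)=0$, one has $x_k\in\operatorname{Im}_F(k)$ for all $k\in\max J$. *)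

(* Defs.v *)
From HB Require Import structures.
From mathcomp Require Import all_boot all_order all_algebra.
Set Implicit Arguments. Unset Strict Implicit. Unset Printing Implicit Defensive.
Import Order.TTheory GRing.Theory.
Local Open Scope order_scope.
Local Open Scope ring_scope.

Definition DCC (d : Order.disp_t) (P : porderType d) : Prop :=
  ~ exists f : nat -> P, forall n, (f n.+1 < f n)%O.

Record pfunctor (R : comPzRingType) (d : Order.disp_t) (P : porderType d) := PFunctor {
  obj : P -> lmodType R;
  arr : forall k j : P, (k <= j)%O -> {linear obj k -> obj j};
  arr_id : forall (j : P) (h : (j <= j)%O) (x : obj j), arr h x = x;
  arr_comp : forall (k l j : P) (h1 : (k <= l)%O) (h2 : (l <= j)%O) (h3 : (k <= j)%O)
               (x : obj k), arr h2 (arr h1 x) = arr h3 x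
}.

Section Defs.
Variables (R : comPzRingType) (d : Order.disp_t) (P : porderType d) (F : pfunctor R P).

(* F(k<j) when k <= j, and 0 otherwise (only ever used when k <= j, or as the
   "Kronecker" coordinate extraction with k = j, where it is the identity). *)
Definition tarr (k j : P) : obj F k -> obj F j :=
  match (k <= j)%O as b return ((k <= j)%O = b -> obj F k -> obj F j) with
  | true => fun h => arr F h
  | false => fun _ _ => 0
  end erefl.

Definition inImF (k : P) (x : obj F k) : Prop :=
  exists (L : seq P) (y : forall l, obj F l),
    all (fun l => (l < k)%O) L /\ x = \sum_(l <- L) tarr k (y l).

Definition maxJ (J : seq P) (k : P) : bool :=
  (k \in J) && all (fun l => ~~ (k < l)%O) J.

(* F is pseudo-projective at j.  A finite J and an element of (+)_{k in J} F(k)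
   are given by a duplicate-free list J and a family x (only x k, k in J, matter). *)
Definition pseudo_projective (j : P) : Prop :=
  forall (J : seq P) (x : forall k, obj F k),
    uniq J -> all (fun k => (k <= j)%O) J ->
    \sum_(k <- J) tarr j (x k) = 0 ->
    forall k, maxJ J k -> inImF (x k).

(* Generating relations of colim_{P_{<j}} F = ((+)_{k<j} F(k)) / Rel :
   r = ((k,l), y) with k <= l < j stands for iota_k y - iota_l (F(k<l) y). *)
Definition relT := {kl : P * P & obj F kl.1}.

Definition relcoord (m : P) (r : relT) : obj F m :=
  (if (tag r).1 == m then tarr m (tagged r) else 0)
  - (if (tag r).2 == m then tarr m (tarr (tag r).2 (tagged r)) else 0).

(* The natural map colim_{P_{<j}} F -> F(j) is injective: every element of
   (+)_{k<j} F(k) (support J, uniq, with coordinates x k) whose image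
   sum_k F(k<j)(x_k) vanishes lies in the submodule generated by the relations. *)
Definition colim_lt_inj (j : P) : Prop :=
  forall (J : seq P) (x : forall k, obj F k),
    uniq J -> all (fun k => (k < j)%O) J ->
    \sum_(k <- J) tarr j (x k) = 0 ->
    exists rels : seq relT,
      all (fun r => ((tag r).1 <= (tag r).2)%O && ((tag r).2 < j)%O) rels /\
      forall m : P, (if m \in J then x m else 0) = \sum_(r <- rels) relcoord m r.

End Defs.

(* Main.v *)
Require Import Defs.
From HB Require Import structures.
From mathcomp Require Import all_boot all_order all_algebra.
From Stdlib Require Import Classical ClassicalEpsilon.

Module Helpers.
Set Implicit Arguments. Unset Strict Implicit. Unset Printing Implicit Defensive.
Import Order.TTheory GRing.Theory.
Local Open Scope order_scope.
Local Open Scope ring_scope.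

Section Aux.
Variables (R : comPzRingType) (d : Order.disp_t) (P : porderType d) (F : pfunctor R P).

Lemma arr_irr (k j : P) (h1 h2 : (k <= j)%O) (x : obj F k) : arr F h1 x = arr F h2 x.
Proof. by rewrite (bool_irrelevance h1 h2). Qed.

Lemma tarrE (k j : P) (h : (k <= j)%O) (x : obj F k) : tarr j x = arr F h x.
Proof.
rewrite /tarr; move: (erefl (k <= j)%O).
case: {2 3}(k <= j)%O => e //; first exact: arr_irr.
by have := h; rewrite e.
Qed.

Lemma tarrNE (k j : P) (h : ~~ (k <= j)%O) (x : obj F k) : tarr j x = 0.
Proof.
rewrite /tarr; move: (erefl (k <= j)%O).
case: {2 3}(k <= j)%O => e //.
by have := h; rewrite e.
Qed.

Lemma tarr_id (k : P) (x : obj F k) : tarr k x = x.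
Proof. by rewrite (tarrE (lexx k)) arr_id. Qed.

Lemma tarr_comp (k l n : P) (x : obj F k) : (k <= l)%O -> (l <= n)%O ->
  tarr n (tarr l x) = tarr n x.
Proof.
move=> h1 h2; rewrite (tarrE h1) (tarrE h2) (tarrE (le_trans h1 h2)).
exact: arr_comp.
Qed.

Lemma tarrD (k j : P) (x y : obj F k) : tarr j (x + y) = tarr j x + tarr j y.
Proof.
case h: (k <= j)%O; first by rewrite !(tarrE h) linearD.
by rewrite !tarrNE ?h // addr0.
Qed.

Lemma tarrN (k j : P) (x : obj F k) : tarr j (- x) = - tarr j x.
Proof.
case h: (k <= j)%O; first by rewrite !(tarrE h) linearN.
by rewrite !tarrNE ?h // oppr0.
Qed.

Lemma tarr0 (k j : P) : tarr j (0 : obj F k) = 0.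
Proof.
case h: (k <= j)%O; first by rewrite !(tarrE h) linear0.
by rewrite !tarrNE ?h.
Qed.

Lemma tarr_sum (k j : P) (I : Type) (s : seq I) (f : I -> obj F k) :
  tarr j (\sum_(i <- s) f i) = \sum_(i <- s) tarr j (f i).
Proof.
elim: s => [|a s IH]; first by rewrite !big_nil tarr0.
by rewrite !big_cons tarrD IH.
Qed.

Definition tagT := {l : P & obj F l}.

Definition ImS (k : P) (x : obj F k) : Prop :=
  exists s : seq tagT, all (fun p => (tag p < k)%O) s /\
    x = \sum_(p <- s) tarr k (tagged p).

Lemma ImS0 k : ImS (0 : obj F k).
Proof. by exists [::]; rewrite big_nil. Qed.

Lemma ImSD k (x y : obj F k) : ImS x -> ImS y -> ImS (x + y).
Proof.
move=> [s1 [h1 ->]] [s2 [h2 ->]]; exists (s1 ++ s2).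
by rewrite all_cat h1 h2 big_cat.
Qed.

Lemma ImSN k (x : obj F k) : ImS x -> ImS (- x).
Proof.
move=> [s [h ->]]; exists [seq @Tagged P (tag p) (fun l => obj F l) (- tagged p) | p : tagT <- s].
split; first by rewrite all_map.
rewrite big_map -sumrN; apply: eq_bigr => p _ /=; by rewrite tarrN.
Qed.

Lemma ImS1 k l (y : obj F l) : (l < k)%O -> ImS (tarr k y).
Proof.
move=> h; exists [:: Tagged (fun l => obj F l) y]; split; first by rewrite /= h.
by rewrite big_seq1.
Qed.

Lemma ImS_sum k (I : Type) (Q : pred I) (s : seq I) (f : I -> obj F k) :
  all Q s -> (forall i, Q i -> ImS (f i)) -> ImS (\sum_(i <- s) f i).
Proof.
move=> hs H; elim: s hs => [|a s IH] /=; first by rewrite big_nil; move=> _; apply: ImS0.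
case/andP=> ha hs; rewrite big_cons; apply: ImSD; first exact: H.
exact: IH.
Qed.

Lemma ImS_inImF k (x : obj F k) : ImS x -> inImF x.
Proof.
move=> [s [hs ->]]; elim: s hs => [|p s IH] /=.
  move=> _; rewrite /inImF; exists [::], (fun l : P => (0 : obj F l)). by rewrite !big_nil.
case/andP=> hp /IH [L [y [hL E0]]]; rewrite big_cons E0.
have [L' [y' [hu [hL' E]]]] : exists L' (y' : forall l, obj F l), uniq L' /\
   all (fun l => (l < k)%O) L' /\
   \sum_(l <- L) tarr k (y l) = \sum_(l <- L') tarr k (y' l).
  clear IH E0; elim: L hL => [|a L IH2] /=.
    by move=> _; exists [::], y; rewrite !big_nil.
  case/andP=> ha /IH2 [L' [y' [hu [hL' E1]]]]; rewrite big_cons E1.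
  case: (boolP (a \in L')) => aL.
    exists L', (fun l => y' l + if a == l then tarr l (y a) else 0).
    split=> //; split=> //.
    under [RHS]eq_bigr => l _ do rewrite tarrD.
    rewrite big_split /= addrC; congr (_ + _).
    rewrite (bigD1_seq a) //= eqxx tarr_id big1_seq ?addr0 //.
    by move=> l /andP [/negPf nl _]; rewrite eq_sym nl tarr0.
  exists (a :: L'), (fun l => if l == a then tarr l (y a) else y' l).
  split; first by rewrite /= aL hu.
  split; first by rewrite /= ha hL'.
  rewrite big_cons eqxx tarr_id; congr (_ + _); apply: eq_big_seq => l lL.
  by case: eqP lL => // ->; rewrite (negPf aL).
clear hL; rewrite E.
case: (boolP (tag p \in L')) => pL.
  exists L', (fun l => y' l + if tag p == l then tarr l (tagged p) else 0).
  split=> //.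
  under [in RHS]eq_bigr => l _ do rewrite tarrD.
  rewrite big_split /= addrC; congr (_ + _).
  rewrite (bigD1_seq (tag p)) //= eqxx tarr_id big1_seq ?addr0 //.
  by move=> l /andP [/negPf nl _]; rewrite eq_sym nl tarr0.
exists (tag p :: L'), (fun l => if l == tag p then tarr l (tagged p) else y' l).
split; first by rewrite /= hp hL'.
rewrite !big_cons eqxx tarr_id; congr (_ + _); apply: eq_big_seq => l lL.
by case: eqP lL => // ->; rewrite (negPf pL).
Qed.

End Aux.

Section WF.
Variables (d : Order.disp_t) (P : porderType d).
Hypothesis dcc : DCC P.

Definition ltP (a b : P) := (a < b)%O.

Lemma dcc_acc (x : P) : Acc ltP x.
Proof.
apply: NNPP => nx.
have step : forall y : {y : P | ~ Acc ltP y}, {z : {z : P | ~ Acc ltP z} | (sval z < sval y)%O}.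
  move=> [y ny]; apply: constructive_indefinite_description.
  apply: NNPP => H; apply: (ny); constructor => z hz.
  apply: NNPP => nz; apply: H; by exists (exist _ z nz).
pose g := fix g (n : nat) : {y : P | ~ Acc ltP y} :=
  match n with 0 => exist _ x nx | n'.+1 => sval (step (g n')) end.
apply: dcc; exists (fun n => sval (g n)) => n /=.
exact: (svalP (step (g n))).
Qed.

Definition Rm (T S : seq P) : Prop :=
  exists2 l, l \in S & forall t, t \in T -> ((t \in S) && (t != l)) || (t < l)%O.

Lemma Rm_sub T S U : {subset T <= S} -> Rm U T -> Rm U S.
Proof.
move=> sub [l lT H]; exists l; first exact: sub.
move=> t /H /orP [/andP [tT tl]|->]; last by rewrite orbT.
by rewrite (sub _ tT) tl.
Qed.

Lemma Acc_sub T S : {subset T <= S} -> Acc Rm S -> Acc Rm T.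
Proof.
move=> sub [H]; constructor => U hU; apply: H; exact: (Rm_sub sub hU).
Qed.

Lemma Acc_cat_lt a D S : all (fun t => (t < a)%O) D ->
  (forall b, (b < a)%O -> forall S, Acc Rm S -> Acc Rm (b :: S)) ->
  Acc Rm S -> Acc Rm (D ++ S).
Proof.
move=> hD IHa hS; elim: D hD => [|b D IH] hD; first exact: hS.
move: hD => /= /andP [hb hD].
apply: IHa; first exact: hb.
exact: IH hD.
Qed.

Lemma Acc_cons a : forall S, Acc Rm S -> Acc Rm (a :: S).
Proof.
elim: (dcc_acc a) => {}a _ IHa S hS.
elim: hS => {}S hS IHS.
constructor => T [l lS H].
case: (eqVneq l a) => [el|nla].
  subst l.
  apply: (@Acc_sub T ([seq t <- T | (t < a)%O] ++ S)).
    move=> t tT; rewrite mem_cat mem_filter.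
    case/orP: (H t tT) => [/andP [] | ->]; last by rewrite tT.
    by rewrite in_cons => /orP [->|->] // ; rewrite orbT.
  apply: (@Acc_cat_lt a); last by constructor.
  - by rewrite all_filter; apply/allP => t _; apply/implyP.
  - move=> b hb S' hS'; exact: IHa.
have lS' : l \in S by move: lS; rewrite in_cons (negPf nla).
apply: (@Acc_sub T (a :: [seq t <- T | t != a])).
  move=> t tT; rewrite in_cons mem_filter tT andbT; by case: eqP.
apply: IHS; exists l => // t; rewrite mem_filter => /andP [ta tT].
case/orP: (H t tT) => [/andP [] | ->]; last by rewrite orbT.
by rewrite in_cons (negPf ta) /= => -> ->.
Qed.

Lemma Acc_all S : Acc Rm S.
Proof.
elim: S => [|a S IH]; last exact: Acc_cons.
by constructor => T [l].
Qed.

End WF.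

Lemma sum_part (V : nmodType) (I : Type) (T : eqType) (s : seq I) (f : I -> T)
   (J : seq T) (G : I -> V) :
  uniq J -> all (fun r => f r \in J) s ->
  \sum_(k <- J) \sum_(r <- s | f r == k) G r = \sum_(r <- s) G r.
Proof.
move=> uJ; under eq_bigr => k _ do rewrite big_mkcond.
rewrite exchange_big /=.
elim: s => [|a s IH] /=; first by rewrite !big_nil.
case/andP=> ha hs; rewrite !big_cons IH //; congr (_ + _).
rewrite (bigD1_seq (f a)) //= eqxx big1 ?addr0 // => k.
by rewrite eq_sym => /negPf ->.
Qed.

Lemma exists_max (d : Order.disp_t) (P : porderType d) (S : seq P) :
  S != [::] -> exists2 l, l \in S & forall t, t \in S -> ~~ (l < t)%O.
Proof.
elim: S => // a S IH _.
case: S IH => [|b S] IH.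
  by exists a => [|t]; rewrite ?mem_seq1 // => /eqP ->; rewrite ltxx.
have [l lS hl] := IH isT.
case: (boolP (l < a)%O) => la.
  exists a; first exact: mem_head.
  move=> t; rewrite in_cons => /orP [/eqP -> | tS]; first by rewrite ltxx.
  apply/negP => at_; by move: (hl t tS); rewrite (lt_trans la at_).
exists l; first by rewrite in_cons lS orbT.
move=> t; rewrite in_cons => /orP [/eqP -> // | tS]; exact: hl.
Qed.

Section Main.
Variables (R : comPzRingType) (d : Order.disp_t) (P : porderType d) (F : pfunctor R P) (i : P).
Hypothesis dcc : DCC P.
Hypothesis inj : forall j : P, (j <= i)%O -> colim_lt_inj F j.

Local Notation rT := (relT F).
Definition zc (rels : seq rT) (n : P) : obj F n := \sum_(r <- rels) relcoord n r.
Definition good (r : rT) : bool := ((tag r).1 <= (tag r).2)%O && ((tag r).2 <= i)%O.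

Lemma relcoordE n (r : rT) : ((tag r).1 <= (tag r).2)%O ->
  relcoord n r = (if (tag r).1 == n then tarr n (tagged r) else 0)
               - (if (tag r).2 == n then tarr n (tagged r) else 0).
Proof.
move=> h; rewrite /relcoord; congr (_ - _).
by case: eqP => // e; rewrite tarr_comp // e.
Qed.

Lemma relcoord0 n (r : rT) : (tag r).1 = (tag r).2 -> relcoord n r = 0.
Proof.
move=> e; rewrite relcoordE ?e //.
have -> : ((tag r).1 == n) = ((tag r).2 == n) by rewrite e.
by rewrite subrr.
Qed.

Lemma tarr_sumP (k j : P) (I : Type) (s : seq I) (Q : pred I) (f : I -> obj F k) :
  tarr j (\sum_(a <- s | Q a) f a) = \sum_(a <- s | Q a) tarr j (f a).
Proof.
rewrite big_mkcond tarr_sum [RHS]big_mkcond; apply: eq_bigr => a _.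
by case: (Q a); rewrite ?tarr0.
Qed.

Variable m : P.
Definition meas (rels : seq rT) := [seq (tag r).2 | r <- rels & (m < (tag r).2)%O].

Lemma main_step : forall S (rels : seq rT), S = meas rels -> all good rels ->
  (forall n, (m < n)%O -> zc rels n = 0) -> ImS (zc rels m).
Proof.
move=> S; elim: (Acc_all dcc S) => {}S _ IH rels eS hg hz; subst S.
case: (eqVneq (meas rels) [::]) => hS.
  have hn : all (fun r => ~~ (m < (tag r).2)%O) rels.
    rewrite all_predC has_filter; move: hS; rewrite /meas.
    by case: (filter _ _).
  rewrite /zc; apply: (@ImS_sum _ _ _ _ m _ (fun r => good r && ~~ (m < (tag r).2)%O)).
    by rewrite all_predI hg hn.
  move=> r /andP [/andP [kl li] nml].
  rewrite relcoordE //.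
  case: (eqVneq (tag r).1 m) => e1.
    have -> : (tag r).2 == m.
      move: kl nml; rewrite e1 le_eqVlt => /orP [/eqP -> //|->] //.
    by rewrite subrr; apply: ImS0.
  case: (eqVneq (tag r).2 m) => e2; last by rewrite subrr; apply: ImS0.
  rewrite sub0r; apply: ImSN; apply: ImS1.
  by rewrite lt_neqAle e1 -e2 kl.
have [l lS hl] := exists_max hS.
have [r0 r0in el] : exists2 r0, r0 \in rels & l = (tag r0).2 /\ (m < (tag r0).2)%O.
  move: lS; rewrite /meas => /mapP [r0]; rewrite mem_filter => /andP [h1 h2] ->.
  by exists r0.
case: el => el ml0.
have ml : (m < l)%O by rewrite el.
have li : (l <= i)%O by rewrite el; case/andP: (allP hg r0 r0in).
have hmax : forall r, r \in rels -> (l <= (tag r).2)%O -> (tag r).2 = l.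
  move=> r rin hle; apply/eqP; rewrite eq_sym eq_le hle /=.
  have : (tag r).2 \in meas rels.
    by rewrite /meas; apply: (map_f (fun r : rT => (tag r).2)); rewrite mem_filter rin (lt_le_trans ml hle).
  move/hl; rewrite lt_neqAle hle andbT negbK => /eqP ->; exact: lexx.
pose Rl := [seq r <- rels | ((tag r).2 == l) && ((tag r).1 != l)].
pose J := undup [seq (tag r).1 | r <- Rl].
pose x := fun k => \sum_(r <- Rl | (tag r).1 == k) tarr k (tagged r).
have hRl : forall r, r \in Rl -> [&& good r, (tag r).2 == l, (tag r).1 != l & r \in rels].
  move=> r; rewrite mem_filter => /andP [/andP [-> ->] rin]; by rewrite (allP hg r rin) rin.
have hJ : all (fun k => (k < l)%O) J.
  apply/allP => k; rewrite mem_undup => /mapP [r /hRl /and4P [/andP [kl _] /eqP e2 ne _] ->].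
  by rewrite lt_neqAle ne -e2 kl.
have hsumRl : \sum_(r <- Rl) tarr l (tagged r) = 0.
  have := hz l ml; rewrite /zc.
  rewrite (eq_big_seq (fun r => if ((tag r).2 == l) && ((tag r).1 != l) then - tarr l (tagged r) else 0)).
    by rewrite -big_mkcond -big_filter sumrN => /eqP; rewrite oppr_eq0 => /eqP.
  move=> r rin; case/andP: (allP hg r rin) => kl _.
  rewrite relcoordE //; case: (eqVneq (tag r).1 l) => e1 /=.
    have e2 : (tag r).2 = l by apply: hmax => //; rewrite -e1.
    by rewrite e2 eqxx subrr andbF.
  by rewrite andbT sub0r; case: ((tag r).2 == l); rewrite ?oppr0.
have hsumJ : \sum_(k <- J) tarr l (x k) = 0.
  have hJa : all (fun r : rT => (tag r).1 \in J) Rl.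
    apply/allP => r rin; rewrite mem_undup; exact: (map_f (fun r : rT => (tag r).1)).
  apply: etrans hsumRl; rewrite -(@sum_part _ _ _ Rl (fun r => (tag r).1) J _ (undup_uniq _) hJa).
  apply: eq_big_seq => k kJ; rewrite /x tarr_sumP; apply: eq_bigr => r /eqP ek.
  rewrite tarr_comp //; first by rewrite ek.
  exact: ltW (allP hJ k kJ).
have [rels' [hr' hx']] := inj li (undup_uniq _) hJ hsumJ.
pose rels'' := [seq r <- rels | (tag r).2 != l] ++ rels'.
have hz'' : forall n, zc rels'' n = zc rels n.
  move=> n; rewrite /zc big_cat big_filter [RHS](bigID (fun r => (tag r).2 != l)) /=.
  congr (_ + _); rewrite -hx'.
  rewrite (bigID (fun r => (tag r).1 != l)) /= [X in _ + X]big1 ?addr0; last first.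
    move=> r /andP [/negPn /eqP e2 /negPn /eqP e1]; apply: relcoord0; by rewrite e1 e2.
  under eq_bigl => r do rewrite negbK.
  rewrite -big_filter -/Rl.
  rewrite (eq_big_seq (fun r => (if (tag r).1 == n then tarr n (tagged r) else 0)
               - (if l == n then tarr n (tagged r) else 0))); last first.
    move=> r /hRl /and4P [/andP [kl _] /eqP e2 _ _]; by rewrite relcoordE // e2.
  rewrite sumrB.
  have -> : \sum_(r <- Rl) (if l == n then tarr n (tagged r) else 0) = 0.
    case: (eqVneq l n) => [eln|nln]; last by rewrite big1.
    by subst n; exact: hsumRl.
  rewrite subr0 -big_mkcond /=.
  case: ifP => nJ; first by [].
  symmetry; apply: big_hasC; apply/hasP => -[r rin /eqP ek].
  by move: nJ; rewrite mem_undup -ek (map_f (fun r : rT => (tag r).1) rin).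
have hg'' : all good rels''.
  rewrite all_cat; apply/andP; split.
    by rewrite all_filter; apply/allP => r rin; apply/implyP => _; exact: (allP hg).
  apply/allP => r /(allP hr') /andP [kl lt]; rewrite /good kl /=.
  exact: le_trans (ltW lt) li.
have hR : Rm (meas rels'') (meas rels).
  exists l => // t /mapP [r]; rewrite mem_filter mem_cat mem_filter.
  move=> /andP [mr /orP [/andP [nl rin] | rin]] ->.
    rewrite nl andbT; apply/orP; left; apply: (map_f (fun r : rT => (tag r).2)); by rewrite mem_filter mr rin.
  by case/andP: (allP hr' r rin) => _ ->; rewrite orbT.
rewrite -hz''; apply: (IH _ hR) => // n mn; rewrite hz''; exact: hz.
Qed.

End Main.

Lemma final (R : comPzRingType) (d : Order.disp_t) (P : porderType d)
    (F : pfunctor R P) (i : P) :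
  DCC P ->
  (forall j : P, (j <= i)%O -> colim_lt_inj F j) ->
  forall j : P, (j <= i)%O -> pseudo_projective F j.
Proof.
move=> dcc inj j ji J x uJ hJ hsum k /andP [kJ kmax].
case: (boolP (j \in J)) => jJ.
  have ekj : k = j.
    have kj : (k <= j)%O := allP hJ k kJ.
    move: kj; rewrite le_eqVlt => /orP [/eqP //|kj].
    by move: (allP kmax j jJ); rewrite kj.
  subst k; exists [seq l <- J | l != j], (fun l => - x l); split.
    rewrite all_filter; apply/allP => l lJ; apply/implyP => lj.
    by rewrite lt_neqAle lj (allP hJ l lJ).
  move: hsum; rewrite (bigD1_seq j) //= tarr_id => /eqP; rewrite addr_eq0 => /eqP ->.
  by rewrite big_filter -sumrN; apply: eq_bigr => l _; rewrite tarrN.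
have hJ' : all (fun k => (k < j)%O) J.
  apply/allP => l lJ; rewrite lt_neqAle (allP hJ l lJ) andbT.
  by apply/eqP => e; move: jJ; rewrite -e lJ.
have [rels [hr hx]] := inj j ji J x uJ hJ' hsum.
have hg : all (good i) rels.
  apply/allP => r /(allP hr) /andP [kl lj]; rewrite /good kl /=.
  exact: le_trans (ltW lj) ji.
have hz : forall n, (k < n)%O -> zc rels n = 0.
  move=> n kn; rewrite /zc -hx; case: ifP => // nJ.
  by move: (allP kmax n nJ); rewrite kn.
have := main_step dcc inj (erefl (meas k rels)) hg hz.
rewrite /zc -hx kJ; exact: ImS_inImF.
Qed.

End Helpers.

Theorem lemma6p3 (R : comPzRingType) (d : Order.disp_t) (P : porderType d)
    (F : pfunctor R P) (i : P) :
  DCC P ->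
  (forall j : P, (j <= i)%O -> colim_lt_inj F j) ->
  forall j : P, (j <= i)%O -> pseudo_projective F j.
Proof. exact: Helpers.final. Qed.
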